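(* Let $G$ be a simple graph and $W\subseteq V(G)$, and let $\varphi'$ be an assignment of the colors $I,F$ to the vertices of $W$ that is a near-bipartite coloring of $G[W]$. Suppose $G-W$ is a forest in which every vertex has degree 3 in $G$. If every component $T$ of $G-W$ is $F$-odd or $F$-leaf-good, then $\varphi'$ extends to a near-bipartite coloring of $G$.
   Context: A near-bipartite coloring is a partition into $I,F$ with $I$ independent and the subgraph induced by $F$ a forest. An $F$-edge is an edge joining a vertex of $G-W$ to a vertex of $W$ colored $F$ by $\varphi'$. A component $T$ of $G-W$ is $F$-odd if the number of $F$-edges incident to $V(T)$ is odd, and $F$-leaf-good if some leaf of $T$ (vertex of degree at most 1 in $T$) has at least two neighbors in $W$ colored $I$. *)

(* Defs.v *)
From mathcomp Require Import all_boot.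
Set Implicit Arguments. Unset Strict Implicit. Unset Printing Implicit Defensive.

Definition simple_graph (V : finType) (e : rel V) : Prop :=
  symmetric e /\ irreflexive e.

Notation colI := true (only parsing).
Notation colF := false (only parsing).

Definition independent (V : finType) (e : rel V) (S : {set V}) : Prop :=
  forall x y, x \in S -> y \in S -> ~~ e x y.

Definition induces_forest (V : finType) (e : rel V) (S : {set V}) : Prop :=
  ~ exists c : seq V,
      [/\ uniq c, 3 <= size c, all (fun x => x \in S) c & cycle e c].

Definition near_bipartite_on (V : finType) (e : rel V) (S : {set V})
    (phi : V -> bool) : Prop :=
  independent e [set x in S | phi x] /\
  induces_forest e [set x in S | ~~ phi x].

Definition degree (V : finType) (e : rel V) (x : V) : nat := #|[set y | e x y]|.

Definition rel_out (V : finType) (e : rel V) (W : {set V}) : rel V :=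
  fun x y => [&& e x y, x \notin W & y \notin W].

Definition comp_out (V : finType) (e : rel V) (W : {set V}) (x : V) : {set V} :=
  [set y | (y \notin W) && connect (rel_out e W) x y].

Definition num_F_edges (V : finType) (e : rel V) (W : {set V})
    (phi : V -> bool) (C : {set V}) : nat :=
  #|[set p : V * V | [&& p.1 \in C, p.2 \in W, ~~ phi p.2 & e p.1 p.2]]|.

Definition F_odd (V : finType) (e : rel V) (W : {set V})
    (phi : V -> bool) (C : {set V}) : Prop :=
  odd (num_F_edges e W phi C).

Definition F_leaf_good (V : finType) (e : rel V) (W : {set V})
    (phi : V -> bool) (C : {set V}) : Prop :=
  exists2 x, x \in C &
    (#|[set y in C | e x y]| <= 1) /\
    (2 <= #|[set w in W | e x w && phi w]|).

(* Main.v *)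
Require Import Defs.
From mathcomp Require Import all_boot.
From mathcomp Require Import zify.
Set Implicit Arguments. Unset Strict Implicit. Unset Printing Implicit Defensive.

Section Aux.
Variables (V : finType) (e : rel V).
Hypothesis esym : symmetric e.
Hypothesis eirr : irreflexive e.

Lemma forest_sub (A B : {set V}) : A \subset B -> induces_forest e B -> induces_forest e A.
Proof.
move=> sAB hB [c [u s3 al cy]]; apply: hB; exists c; split=> //.
by apply/allP=> y /(allP al) /(subsetP sAB).
Qed.

Definition aS (W : {set V}) (phi : V -> bool) z := #|[set w in W | e z w && phi w]|.
Definition bS (W : {set V}) (phi : V -> bool) z := #|[set w in W | e z w && ~~ phi w]|.

Lemma num_F_sum W phi (C : {set V}) :
  num_F_edges e W phi C = \sum_(z in C) bS W phi z.
Proof.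
rewrite /num_F_edges -sum1_card.
transitivity (\sum_(i | i \in C) \sum_(j | [&& j \in W, ~~ phi j & e i j]) 1).
  by rewrite pair_big_dep; apply: eq_bigl => p; rewrite inE.
apply: eq_bigr => i _; rewrite sum1dep_card /bS; apply: eq_card => j.
by rewrite !inE; case: (j \in W); case: (e i j); case: (phi j).
Qed.

Lemma rel_out_sym W : symmetric (rel_out e W).
Proof.
move=> a b; rewrite /rel_out esym.
by case: (a \in W); case: (b \in W); rewrite ?andbF.
Qed.

Lemma connect_out_sym W : connect_sym (rel_out e W).
Proof. exact/sym_connect_sym/rel_out_sym. Qed.

Lemma connect_avoid W v y z : connect (rel_out e W) y z ->
  (forall u, connect (rel_out e W) y u -> u != v) ->
  connect (rel_out e (v |: W)) y z.
Proof.
move=> /connectP [p]; elim: p y => [|a p IH] y /=.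
  by move=> _ -> _; exact: connect0.
move=> /andP [ya pa] zl hav.
apply: (connect_trans (y := a)).
  apply: connect1; have ha := hav a (connect1 ya); have hy := hav y (connect0 _ y).
  move: ya; rewrite /rel_out !inE !negb_or => /and3P [-> -> ->].
  by rewrite ha hy.
apply: IH => // u au; apply: hav; exact: connect_trans (connect1 ya) au.
Qed.

Lemma connect_mono W v y z : connect (rel_out e (v |: W)) y z -> connect (rel_out e W) y z.
Proof.
apply: connect_sub => a b; rewrite /rel_out !inE !negb_or => /and3P [eab /andP[_ aW] /andP[_ bW]].
by apply: connect1; rewrite /rel_out eab aW bW.
Qed.


Lemma path_avoid W v y p : path (rel_out e W) y p -> v \notin y :: p ->
  path (rel_out e (v |: W)) y p.
Proof.
elim: p y => [|a p IH] y //= /andP [ya pa]; rewrite !inE !negb_or => /and3P [yv av vp].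
rewrite IH ?inE ?negb_or ?av //; move: ya; rewrite /rel_out !inE !negb_or => /and3P [-> -> ->].
by rewrite eq_sym yv eq_sym av.
Qed.

Definition upd (phi : V -> bool) v c y := if y == v then c else phi y.


Section Count.
Variables (W : {set V}) (phi' : V -> bool) (v : V) (c : bool).
Hypothesis vW : v \notin W.
Local Notation W' := (v |: W).
Local Notation phi2 := (upd phi' v c).

Lemma bS_upd z : z != v -> bS W' phi2 z = bS W phi' z + (~~ c && e z v).
Proof.
move=> zv; rewrite /bS; case: c => /=.
  rewrite addn0; apply: eq_card => w; rewrite !inE /upd.
  by case: (w =P v) => [->|] //=; rewrite (negbTE vW) andbF.
case ezv: (e z v) => /=.
  transitivity #|v |: [set w in W | e z w && ~~ phi' w]|.
    apply: eq_card => w; rewrite !inE /upd.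
    by case: (w =P v) => [->|] //=; rewrite ezv.
  by rewrite cardsU1 inE (negbTE vW) /= addnC.
rewrite addn0; apply: eq_card => w; rewrite !inE /upd.
by case: (w =P v) => [->|] //=; rewrite ezv !andbF.
Qed.

Lemma count_upd (C : {set V}) : v \in C ->
  num_F_edges e W' phi2 (C :\ v) + bS W phi' v =
  num_F_edges e W phi' C + (if c then 0 else #|[set z in C | e v z]|).
Proof.
move=> vC; rewrite !num_F_sum (big_setD1 v vC) /=.
rewrite (eq_bigr (fun z => bS W phi' z + (~~ c && e z v))); last first.
  by move=> z; rewrite !inE => /andP [zv _]; exact: bS_upd.
rewrite big_split /=.
have -> : \sum_(z in C :\ v) (~~ c && e z v : nat) =
          (if c then 0 else #|[set z in C | e v z]|).
  case: c => /=; first by rewrite big1.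
  rewrite -sum1_card [RHS]big_mkcond [LHS]big_mkcond; apply: eq_bigr => z _.
  rewrite !inE esym; case: (z =P v) => [->|_] /=; first by rewrite eirr; case: (v \in C).
  by case: (z \in C); case: (e v z).
by rewrite addnC addnA.
Qed.

Lemma leaf_transfer (C : {set V}) w : w \in C -> w != v ->
  #|[set y in C | e w y]| <= 1 -> 2 <= aS W phi' w ->
  F_leaf_good e W' phi2 (C :\ v).
Proof.
move=> wC wv l1 a2; exists w; first by rewrite !inE wv wC.
split.
  apply: leq_trans l1; apply: subset_leq_card; apply/subsetP => y.
  by rewrite !inE => /andP [/andP [_ ->] ->].
apply: leq_trans a2 _; apply: subset_leq_card; apply/subsetP => y.
rewrite !inE /upd => /andP [yW /andP [-> py]].
case: (y =P v) => [yv|]; first by move: vW; rewrite -yv yW.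
by rewrite yW orbT py.
Qed.

Lemma indep_upd : independent e [set y in W | phi' y] -> (c -> aS W phi' v = 0) ->
  independent e [set y in W' | phi2 y].
Proof.
move=> ind ca y z; rewrite !inE /upd.
have key : forall u, c -> u \in W -> phi' u -> ~~ e v u.
  move=> u hc uW pu; apply/negP => evu; move: (ca hc) => /eqP.
  rewrite cards_eq0 => /eqP h.
  have : u \in [set w in W | e v w && phi' w] by rewrite !inE uW evu pu.
  by rewrite h inE.
case: (y =P v) => [->|yv]; case: (z =P v) => [->|zv] /=.
- by rewrite eirr.
- by move=> hc /andP [zW pz]; exact: key.
- by move=> /andP [yW py] hc; rewrite esym; exact: key.
- move=> /andP [yW py] /andP [zW pz]; apply: ind; by rewrite inE ?yW ?zW.
Qed.

Lemma forest_upd : induces_forest e [set y in W | ~~ phi' y] ->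
  (~~ c -> bS W phi' v <= 1) ->
  induces_forest e [set y in W' | ~~ phi2 y].
Proof.
move=> fo cb [s [us s3 als cys]].
case vs: (v \in s); last first.
  apply: fo; exists s; split => //; apply/allP => y ys.
  move: (allP als y ys); rewrite !inE /upd.
  by case: (y =P v) => [yv|_] //=; move: vs; rewrite -yv ys.
have hc : ~~ c.
  by move: (allP als v vs); rewrite !inE /upd eqxx.
case: (rot_to vs) => i s' hrot.
have us2 : uniq (v :: s') by rewrite -hrot rot_uniq.
have s32 : 3 <= size (v :: s') by rewrite -hrot size_rot.
have al2 : all (fun y => y \in [set y in W' | ~~ phi2 y]) (v :: s').
  by rewrite -hrot (perm_all _ (_ : perm_eq (rot i s) s)) // perm_rot.
have cy2 : cycle e (v :: s') by rewrite -hrot rot_cycle.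
move: cy2; rewrite /= rcons_path => /andP [pth elv].
case: s' us2 s32 al2 pth elv {hrot} => [|p0 [|q0 q]] // us2 _ al2 /andP [evp0 _] elv.
rewrite /= in elv.
set l := last q0 q in elv.
have lq : l \in q0 :: q by rewrite /l mem_last.
have p0l : p0 != l.
  apply/eqP => h; move: us2; rewrite /= => /andP [_ /andP [/negP p0q _]].
  by apply: p0q; rewrite h.
have memF : forall u, u \in p0 :: q0 :: q -> (u \in [set w in W | e v w && ~~ phi' w]) = e v u.
  move=> u uin; have uv : u != v.
    by apply/eqP => h; move: us2; rewrite /= -h => /andP [/negP nu _]; exact: nu uin.
  have uin2 : u \in [:: v, p0, q0 & q] by rewrite in_cons uin orbT.
  move: (allP al2 u uin2).
  rewrite !inE /upd (negbTE uv) /= => /andP [-> ->].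
  by rewrite andbT.
suff : 1 < bS W phi' v by rewrite ltnNge (cb hc).
apply/card_gt1P; exists p0, l; split => //.
  by rewrite memF ?inE ?eqxx.
rewrite memF; first by rewrite esym.
by rewrite in_cons lq orbT.
Qed.

Lemma far_same (C : {set V}) : (forall p, p \in C -> ~~ e p v) ->
  num_F_edges e W' phi2 C = num_F_edges e W phi' C /\
  (F_leaf_good e W phi' C -> F_leaf_good e W' phi2 C).
Proof.
move=> hC; split.
  rewrite !num_F_sum; apply: eq_bigr => z zC; apply: eq_card => w.
  rewrite !inE /upd; case: (w =P v) => [->|] //=.
  by rewrite (negbTE (hC z zC)) (negbTE vW) !andbF.
case=> w wC [l1 a2]; exists w => //; split => //; apply: leq_trans a2 _.
apply: subset_leq_card; apply/subsetP => y; rewrite !inE /upd => /andP [yW /andP [-> py]].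
case: (y =P v) => [yv|]; first by move: vW; rewrite -yv yW.
by rewrite yW orbT py.
Qed.

End Count.


Lemma deg_split (W : {set V}) (phi : V -> bool) (C : {set V}) v :
  (forall z, e v z -> (z \in C) = (z \notin W)) ->
  degree e v = #|[set z in C | e v z]| + aS W phi v + bS W phi v.
Proof.
move=> hC; rewrite /degree -(cardsID W [set y | e v y]).
rewrite -(cardsID [set y | phi y] ([set y | e v y] :&: W)).
have e1 : #|[set y | e v y] :\: W| = #|[set z in C | e v z]|.
  apply: eq_card => z; rewrite !inE.
  by case evz: (e v z); rewrite ?andbF ?andbT // hC.
have e2 : #|[set y | e v y] :&: W :&: [set y | phi y]| = aS W phi v.
  by apply: eq_card => z; rewrite !inE; case: (e v z); case: (z \in W); case: (phi z).
have e3 : #|[set y | e v y] :&: W :\: [set y | phi y]| = bS W phi v.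
  by apply: eq_card => z; rewrite !inE; case: (e v z); case: (z \in W); case: (phi z).
by rewrite e1 e2 e3 [LHS]addnC addnA.
Qed.

Definition gpath (T0 : {set V}) (s : seq V) :=
  [&& uniq s, all (fun y => y \in T0) s & sorted e s].

Section Comp.
Variables (W : {set V}) (phi' : V -> bool) (x : V).
Hypothesis xW : x \notin W.
Local Notation T := (comp_out e W x).
Local Notation R := (rel_out e W).

Lemma memT y : (y \in T) = (y \notin W) && connect R x y.
Proof. by rewrite inE. Qed.

Lemma xT : x \in T. Proof. by rewrite memT xW connect0. Qed.

Lemma T_notW y : y \in T -> y \notin W. Proof. by rewrite memT => /andP[]. Qed.

Lemma T_nb y z : y \in T -> z \notin W -> e y z -> z \in T.
Proof.
rewrite memT => /andP [yW xy] zW eyz; rewrite memT zW.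
by apply: connect_trans xy (connect1 _); rewrite /rel_out eyz yW zW.
Qed.

Lemma T_same y : y \in T -> comp_out e W y = T.
Proof.
rewrite memT => /andP [yW xy]; apply/setP => z; rewrite !inE.
case: (z \in W) => //=; apply/idP/idP => h.
  exact: connect_trans xy h.
by rewrite connect_out_sym in xy; exact: connect_trans xy h.
Qed.

Variables (v : V) (c : bool).
Hypothesis vT : v \in T.
Local Notation W' := (v |: W).

Lemma noedge y p : y \notin T -> y \notin W -> p \in comp_out e W y -> ~~ e p v.
Proof.
move=> yT yW; rewrite inE => /andP [pW yp]; apply/negP => epv; apply/negP: yT.
move: (vT); rewrite memT => /andP [vW xv]; rewrite memT yW andTb negbK.
apply: connect_trans xv _; rewrite connect_out_sym.
by apply: connect_trans yp (connect1 _); rewrite /rel_out epv pW vW.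
Qed.

Lemma comp_C1 y : y \notin W' -> y \notin T -> comp_out e W' y = comp_out e W y.
Proof.
move=> yW' yT; move: yW'; rewrite !inE negb_or => /andP [yv yW]; apply/setP => z; rewrite !inE negb_or.
apply/idP/idP.
  by move=> /andP [/andP [_ ->] /connect_mono ->].
move=> /andP [zW yz].
have hav : forall u, connect R y u -> u != v.
  move=> u yu; apply/eqP => uv; subst u; apply/negP: yT; rewrite memT yW andTb negbK.
  move: (vT); rewrite memT => /andP [_ xv].
  by apply: connect_trans xv _; rewrite connect_out_sym.
by rewrite (hav z yz) zW /=; exact: connect_avoid.
Qed.

Lemma comp_C2 y : #|[set z in T | e v z]| <= 1 -> y \in T :\ v ->
  comp_out e W' y = T :\ v.
Proof.
move=> leaf; rewrite !inE => /andP [yv /andP [yW xy]].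
apply/setP => z; rewrite !inE negb_or.
apply/idP/idP.
  move=> /andP [/andP [zv zW] /connect_mono yz]; rewrite zv zW /=.
  exact: connect_trans xy yz.
move=> /and3P [zv zW xz]; rewrite zv zW /=.
have : connect R y z by apply: connect_trans _ xz; rewrite connect_out_sym.
case/connectP => p pth zl; rewrite zl in zv *; move: zv.
case: (shortenP pth) => p' pth' uq _ zv.
apply/connectP; exists p' => //; apply: path_avoid => //.
rewrite inE negb_or eq_sym yv /=; apply/negP => vp.
case/splitPr: vp pth' uq zv => p1 p2.
case: p2 => [|w p3]; first by rewrite last_cat /= eqxx.
move=> pth' uq _.
move: pth'; rewrite cat_path /= => /and3P [_ uv /andP [vw _]].
have uw : last y p1 != w.
  apply/eqP => uw; move: uq; rewrite -cat_cons cat_uniq => /and3P [_ /hasPn h _].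
  have hw : w \in v :: w :: p3 by rewrite !inE eqxx orbT.
  by move: (h w hw); rewrite -uw mem_last.
move: uv vw; rewrite /rel_out => /and3P [euv uW _] /and3P [evw _ wW].
have uT : last y p1 \in T by apply: T_nb vT uW _; rewrite esym.
have wT : w \in T by apply: T_nb vT wW evw.
suff : 1 < #|[set z in T | e v z]| by rewrite ltnNge leaf.
apply/card_gt1P; exists (last y p1), w; split => //; rewrite inE; apply/andP; split => //.
by rewrite esym.
Qed.


Lemma leaf_head s : induces_forest e (~: W) -> gpath T s -> 2 <= size s ->
  (forall s', gpath T s' -> size s' <= size s) ->
  #|[set z in T | e (head x s) z]| = 1.
Proof.
move=> fo gs s2 mx; case: s gs s2 mx => [|a [|b s2]] // gs _ mx /=.
suff -> : [set z in T | e a z] = [set b] by rewrite cards1.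
move: (gs) => /and3P [us als ss].
have aT : a \in T by move: als => /andP [].
have bT : b \in T by move: als => /= /and3P [].
have eab : e a b by move: ss => /= /andP [].
apply/setP => z; rewrite in_set1 in_set; apply/idP/idP; last first.
  by move/eqP => ->; rewrite bT eab.
move=> /andP [zT ez].
case zs: (z \in [:: a, b & s2]); last first.
  have : gpath T (z :: [:: a, b & s2]).
    apply/and3P; split; first by rewrite cons_uniq zs.
      by move: als => /= ->; rewrite zT.
    by move: ss => /= ->; rewrite esym ez.
  by move/mx => /=; rewrite ltnn.
move: zs; rewrite in_cons => /orP [/eqP za|]; first by rewrite za eirr in ez.
rewrite in_cons => /orP [//|zs2].
exfalso; case/splitPr: zs2 gs us als ss mx => p1 p2 gs us als ss mx.
apply: fo; exists (a :: b :: rcons p1 z).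
have hs : [:: a, b & p1 ++ z :: p2] = (a :: b :: rcons p1 z) ++ p2 by rewrite /= cat_rcons.
split.
- by move: us; rewrite hs cat_uniq => /andP [].
- by rewrite /= size_rcons.
- apply/allP => y yc; have : y \in [:: a, b & p1 ++ z :: p2] by rewrite hs mem_cat yc.
  move/(allP als) => yT; rewrite inE; exact: T_notW yT.
- rewrite /= rcons_path last_rcons (esym z a) ez andbT.
  by move: ss; rewrite hs /= cat_path => /andP [-> /andP [-> _]].
Qed.

Lemma two_leaves : induces_forest e (~: W) -> (exists2 y, y \in T & e x y) ->
  exists v1 v2, [/\ v1 \in T, v2 \in T, v1 != v2,
    #|[set z in T | e v1 z]| = 1 & #|[set z in T | e v2 z]| = 1].
Proof.
move=> fo [y yT exy].
pose P := fun n => [exists t : n.-tuple V, gpath T t].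
have P2 : P 2.
  apply/existsP; exists [tuple x; y].
  apply/and3P; split.
  - rewrite /= inE andbT; apply/eqP => h; by rewrite h eirr in exy.
  - by rewrite /= xT yT.
  - by rewrite /= exy.
have exP : exists n, P n by exists 2.
have ubP : forall n, P n -> n <= #|V|.
  move=> n /existsP [t /and3P [ut _ _]].
  by rewrite -(size_tuple t) -(card_uniqP ut) max_card.
case: (ex_maxnP exP ubP) => N /existsP [t gt] mxN.
have mx : forall s', gpath T s' -> size s' <= size t.
  move=> s' gs'; rewrite size_tuple; apply: mxN; apply/existsP; exists (in_tuple s').
  exact: gs'.
have N2 : 2 <= size t by rewrite size_tuple; apply: mxN P2.
have l1 := leaf_head fo gt N2 mx.
have grt : gpath T (rev t).
  move: gt; rewrite /gpath rev_uniq all_rev rev_sorted => /and3P [-> -> st] /=.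
  have ee : (fun z : V => e^~ z) =2 e by move=> u w; exact: esym.
  by case: (tval t) st => [|a l] //=; rewrite (eq_path ee).
have N2' : 2 <= size (rev t) by rewrite size_rev.
have mx' : forall s', gpath T s' -> size s' <= size (rev t) by move=> s' /mx; rewrite size_rev.
have l2 := leaf_head fo grt N2' mx'.
move: (gt) N2 l1 l2 grt; case: (tval t) => [|a [|b l]] // /and3P [ut alt _] _ l1 l2 _.
rewrite (lastI a (b :: l)) rev_rcons /= in l2.
exists a, (last b l); split => //.
- by move: alt => /andP [].
- by apply: (allP alt); rewrite in_cons mem_last orbT.
- apply/eqP => h; move: ut => /andP [/negP nu _]; apply: nu; by rewrite h mem_last.
Qed.



Lemma reduce :
  near_bipartite_on e W phi' -> induces_forest e (~: W) ->
  (forall y, y \notin W -> degree e y = 3) ->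
  (forall y, y \notin W -> F_odd e W phi' (comp_out e W y) \/
                          F_leaf_good e W phi' (comp_out e W y)) ->
  #|[set z in T | e v z]| <= 1 ->
  (c -> aS W phi' v = 0) -> (~~ c -> bS W phi' v <= 1) ->
  (T :\ v != set0 -> F_odd e W' (upd phi' v c) (T :\ v) \/
                     F_leaf_good e W' (upd phi' v c) (T :\ v)) ->
  [/\ near_bipartite_on e W' (upd phi' v c), induces_forest e (~: W'),
      (forall y, y \notin W' -> degree e y = 3) &
      (forall y, y \notin W' -> F_odd e W' (upd phi' v c) (comp_out e W' y) \/
                    F_leaf_good e W' (upd phi' v c) (comp_out e W' y))].
Proof.
move=> [ind fF] fo dg hyp leaf ca cb new.
have vW := T_notW vT.
split.
- by split; [exact: indep_upd | exact: forest_upd].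
- by apply: forest_sub fo; apply/subsetP => y; rewrite !inE negb_or => /andP [_ ->].
- by move=> y; rewrite !inE negb_or => /andP [_ yW]; exact: dg.
- move=> y yW'; case yT: (y \in T).
  + have yTv : y \in T :\ v.
      by rewrite in_setD1 yT andbT; move: yW'; rewrite !inE negb_or => /andP [-> _].
    rewrite (comp_C2 leaf yTv); apply: new; apply/set0Pn; by exists y.
  + have yW : y \notin W by move: yW'; rewrite !inE negb_or => /andP [_ ->].
    rewrite (comp_C1 yW' (negbT yT)).
    have [hn hl] := @far_same W phi' v c vW (comp_out e W y)
                      (fun p hp => noedge (negbT yT) yW hp).
    by case: (hyp y yW) => [h|h]; [left; rewrite /F_odd hn | right; exact: hl].
Qed.

End Comp.

Lemma main_ind n : forall (W : {set V}) (phi' : V -> bool), #|~: W| = n ->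
  near_bipartite_on e W phi' -> induces_forest e (~: W) ->
  (forall y, y \notin W -> degree e y = 3) ->
  (forall y, y \notin W -> F_odd e W phi' (comp_out e W y) \/
                          F_leaf_good e W phi' (comp_out e W y)) ->
  exists phi : V -> bool,
    (forall y, y \in W -> phi y = phi' y) /\ near_bipartite_on e setT phi.
Proof.
elim: n => [|n IH] W phi' cW nb fo dg hyp.
  have WT : W = setT.
    move/eqP: cW; rewrite cards_eq0 => /eqP h; apply/setP => y; rewrite inE.
    apply/negPn/negP => yW; have : y \in ~: W by rewrite inE.
    by rewrite h inE.
  by exists phi'; split => //; rewrite -WT.
have [x xW] : exists x, x \notin W.
  have : 0 < #|~: W| by rewrite cW.
  by case/card_gt0P => x; rewrite inE => ?; exists x.
set T := comp_out e W x.
have step : forall v (c : bool), v \in T -> #|[set z in T | e v z]| <= 1 ->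
    (c -> aS W phi' v = 0) -> (~~ c -> bS W phi' v <= 1) ->
    (T :\ v != set0 -> F_odd e (v |: W) (upd phi' v c) (T :\ v) \/
                       F_leaf_good e (v |: W) (upd phi' v c) (T :\ v)) ->
    exists phi : V -> bool,
      (forall y, y \in W -> phi y = phi' y) /\ near_bipartite_on e setT phi.
  move=> v c vT leaf ca cb new.
  have [nb' fo' dg' hyp'] := reduce vT nb fo dg hyp leaf ca cb new.
  have vW := T_notW vT.
  have cW' : #|~: (v |: W)| = n.
    move: cW; rewrite (cardsD1 v) inE vW add1n => /eqP; rewrite eqSS => /eqP <-.
    by apply: eq_card => y; rewrite !inE negb_or.
  have [phi [agree nbphi]] := IH _ _ cW' nb' fo' dg' hyp'.
  exists phi; split => // y yW; rewrite agree ?inE ?yW ?orbT // /upd.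
  by case: (y =P v) => [yv|//]; move: vW; rewrite -yv yW.
have hsplit : forall v, v \in T ->
    3 = #|[set z in T | e v z]| + aS W phi' v + bS W phi' v.
  move=> v vT; rewrite -(dg v (T_notW vT)); apply: deg_split => z evz.
  apply/idP/idP; first exact: T_notW.
  by move=> zW; exact: T_nb vT zW evz.
have [d0|dpos] := eqVneq #|[set z in T | e x z]| 0.
  have Tx : T = [set x].
    apply/setP => z; rewrite in_set1; apply/idP/idP; last by move/eqP ->; exact: xT.
    move=> zT; apply/negPn/negP => zx.
    move: (zT); rewrite memT => /andP [_ /connectP [p pth zl]].
    case: p pth zl => [|a p] /=; first by move=> _ h; rewrite h eqxx in zx.
    move=> /andP [xa _] _; move: xa; rewrite /rel_out => /and3P [exa _ aW].
    have : a \in [set z in T | e x z] by rewrite in_set exa andbT; exact: T_nb (xT xW) aW exa.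
    by move/eqP: d0; rewrite cards_eq0 => /eqP ->; rewrite inE.
  have hx := hsplit x (xT xW); rewrite d0 add0n in hx.
  have nF : num_F_edges e W phi' T = bS W phi' x by rewrite num_F_sum Tx big_set1.
  apply: (step x (1 < bS W phi' x)) => //.
  - exact: xT.
  - by rewrite d0.
  - move=> b2; case: (hyp x xW) => [|[w wT [_ a2]]].
      rewrite -/T /F_odd nF => ob.
      have : bS W phi' x = 2 \/ bS W phi' x = 3 by lia.
      case=> hb; first by rewrite hb in ob.
      lia.
    move: wT; rewrite -/T Tx in_set1 => /eqP wx; rewrite wx in a2; have a2' : 2 <= aS W phi' x := a2; lia.
  - by rewrite ltnNge negbK.
  - by rewrite Tx setDv eqxx.
have [y yT exy] : exists2 y, y \in T & e x y.
  have : 0 < #|[set z in T | e x z]| by rewrite lt0n.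
  by case/card_gt0P => y; rewrite in_set => /andP [yT exy]; exists y.
have [v1 [v2 [v1T v2T v12 l1 l2]]] := two_leaves xW fo (ex_intro2 _ _ y yT exy).
have leafstep : forall v, v \in T -> #|[set z in T | e v z]| = 1 ->
    0 < bS W phi' v -> exists phi : V -> bool,
      (forall y, y \in W -> phi y = phi' y) /\ near_bipartite_on e setT phi.
  move=> v vT lv bv; have hv := hsplit v vT; rewrite lv in hv.
  have vW := T_notW vT.
  apply: (step v (bS W phi' v == 2)) => //.
  - by rewrite lv.
  - by move/eqP => b2; lia.
  - by move=> nb2; move: nb2 => /eqP nb2; lia.
  move=> _.
  have cu := count_upd phi' (bS W phi' v == 2) vW vT.
  rewrite lv in cu.
  case: (hyp x xW) => [|[w wT [lw a2]]].
    rewrite -/T /F_odd => ob; left.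
    have : odd (num_F_edges e (v |: W) (upd phi' v (bS W phi' v == 2)) (T :\ v) +
                bS W phi' v) =
           odd (num_F_edges e W phi' T + (if bS W phi' v == 2 then 0 else 1)) by rewrite cu.
    case: eqP => hb; rewrite ?hb !oddD ob /= ?addbT ?addbF //.
    have -> : bS W phi' v = 1 by lia.
    by rewrite /= addbT => /negbRL.
  right; apply: (leaf_transfer _ vW wT) => //.
  by apply/eqP => wv; rewrite wv in a2; have a2' : 2 <= aS W phi' v := a2; lia.
case b1: (0 < bS W phi' v1); first exact: (leafstep v1 v1T l1 b1).
case b2: (0 < bS W phi' v2); first exact: (leafstep v2 v2T l2 b2).
have hv1 := hsplit v1 v1T; have hv2 := hsplit v2 v2T.
rewrite l1 in hv1; rewrite l2 in hv2.
apply: (step v1 false) => //.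
- by rewrite l1.
- by move: b1; rewrite lt0n => /negbT; rewrite negbK => /eqP ->.
- move=> _; right; apply: (leaf_transfer _ (T_notW v1T) v2T).
  + by rewrite eq_sym.
  + by rewrite l2.
  + move: b2; rewrite lt0n => /negbT; rewrite negbK => /eqP b2; lia.
Qed.
End Aux.

Theorem lemma4p35 (V : finType) (e : rel V) (W : {set V}) (phi' : V -> bool) :
  simple_graph e ->
  near_bipartite_on e W phi' ->
  induces_forest e (~: W) ->
  (forall x, x \notin W -> degree e x = 3) ->
  (forall x, x \notin W ->
     F_odd e W phi' (comp_out e W x) \/ F_leaf_good e W phi' (comp_out e W x)) ->
  exists phi : V -> bool,
    (forall x, x \in W -> phi x = phi' x) /\ near_bipartite_on e setT phi.
Proof.
move=> [esym eirr]; exact: (main_ind esym eirr (erefl #|~: W|)).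
Qed.
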